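(* Let $w\in\mathbb R^5$ and suppose $\Sigma^w(\mathbf R_i)\ge\Sigma^w(\mathbf I)$ for all $1\le i\le 5$. Then for every reduced word $\mathbf U=\mathbf R_i\mathbf U'$ over $\{\mathbf R_1,\dots,\mathbf R_5\}$ (evaluated as a product of matrices), $\Sigma^w(\mathbf U)\ge\Sigma^w(\mathbf U')$.
   Context: Let $\mathbf e\in\mathbb R^5$ be the all-ones vector, $\mathbf e_i$ the $i$-th standard basis vector, $\mathbf I$ the $5\times5$ identity. For $1\le i\le 5$, $\mathbf R_i=\mathbf I+\mathbf e_i\mathbf e^\intercal-3\mathbf e_i\mathbf e_i^\intercal$ (the matrix equal to $\mathbf I$ except that its $i$-th row has diagonal entry $-1$ and all off-diagonal entries $1$). For a $5\times 5$ matrix $\mathbf U$, its weighted mass is $\Sigma^w(\mathbf U)=\mathbf e^\intercal\mathbf U w$. A word $\mathbf U_1\mathbf U_2\cdots\mathbf U_n$ with letters in $\{\mathbf R_1,\dots,\mathbf R_5\}$ is reduced if it contains no (consecutive) subword of the form $\mathbf R_i\mathbf R_i$, and no subword $\mathbf V_1\mathbf V_2\cdots\mathbf V_{2m}$ with $m\ge2$, $\mathbf V_1=\mathbf V_3$, $\mathbf V_{2m-2}=\mathbf V_{2m}$ and $\mathbf V_{2j}=\mathbf V_{2j+3}$ for $1\le j\le m-2$ (in particular no subword $(\mathbf R_i\mathbf R_j)^2$). *)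

(* Defs.v *)
(* Matrices over an arbitrary real field (R^5 instantiated
   with any realFieldType, which includes the real numbers). *)
From HB Require Import structures.
From mathcomp Require Import all_boot all_order all_algebra.
Set Implicit Arguments. Unset Strict Implicit. Unset Printing Implicit Defensive.
Import Order.TTheory GRing.Theory Num.Theory.
Local Open Scope ring_scope.

(* R_i = I + e_i e^T - 3 e_i e_i^T : identity except row i, which has
   diagonal entry -1 and off-diagonal entries 1. *)
Definition Rmx (R : realFieldType) (i : 'I_5) : 'M[R]_5 :=
  \matrix_(a < 5, b < 5)
    if a == i then (if b == i then -1 else 1) else (a == b)%:R.

(* weighted mass  Sigma^w(U) = e^T U w *)
Definition wmass (R : realFieldType) (U : 'M[R]_5) (w : 'cV[R]_5) : R :=
  \sum_(a < 5) (U *m w) a 0.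

Definition word_mx (R : realFieldType) (s : seq 'I_5) : 'M[R]_5 :=
  foldr (fun i M => Rmx R i *m M) 1%:M s.

(* V_k (1-indexed) of a word v *)
Definition letter (v : seq 'I_5) (k : nat) : 'I_5 := nth ord0 v k.-1.

Definition forbidden (v : seq 'I_5) : Prop :=
  exists m : nat, [/\ (2 <= m)%N, size v = (2 * m)%N,
    letter v 1 = letter v 3,
    letter v (2 * m - 2) = letter v (2 * m) &
    forall j : nat, (1 <= j)%N -> (j <= m - 2)%N ->
      letter v (2 * j) = letter v (2 * j + 3)].

Definition reduced (s : seq 'I_5) : Prop :=
  (forall k : nat, (k.+1 < size s)%N -> nth ord0 s k <> nth ord0 s k.+1) /\
  (forall v : seq 'I_5, infix v s -> ~ forbidden v).

(* Main.v *)
Require Import Defs.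
From HB Require Import structures.
From mathcomp Require Import all_boot all_order all_algebra.
From mathcomp Require Import ring lra zify.
Import Order.TTheory GRing.Theory Num.Theory.
Local Open Scope ring_scope.

Lemma Rmx_mul (R : realFieldType) j (v : 'cV[R]_5) a :
  (Rmx R j *m v) a 0 = if a == j then \sum_b v b 0 - 2 * v j 0 else v a 0.
Proof.
rewrite mxE; under eq_bigr do rewrite mxE.
case: (eqVneq a j) => [_|ne].
  rewrite (bigD1 j) //= eqxx [X in _ = X - _](bigD1 j) //=.
  under eq_bigr => b /negbTE -> do rewrite mul1r.
  lra.
rewrite (bigD1 a) //= eqxx mul1r big1 ?addr0 // => b nb.

by rewrite eq_sym (negbTE nb) mul0r.
Qed.

Lemma sum_upd (R : realFieldType) (f : 'I_5 -> R) j a :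
  \sum_k (if k == j then a else f k) = \sum_k f k - f j + a.
Proof.
rewrite (bigD1 j) //= eqxx [in RHS](bigD1 j) //= (eq_bigr f); first lra.
by move=> k /negbTE ->.
Qed.

Definition xsum {R : realFieldType} (x : 'I_5 -> R) := \sum_k x k.
Definition Rv {R : realFieldType} (j : 'I_5) (x : 'I_5 -> R) : 'I_5 -> R :=
  fun k => if k == j then xsum x - 2 * x j else x k.
Definition ev {R : realFieldType} (i : 'I_5) : 'I_5 -> R := fun k => (k == i)%:R.
Definition xw {R : realFieldType} (i : 'I_5) (s : seq 'I_5) : 'I_5 -> R :=
  foldl (fun x j => Rv j x) (ev i) s.
Definition Dv {R : realFieldType} (v : 'cV[R]_5) (i : 'I_5) : R :=
  \sum_b v b 0 - 3 * v i 0.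

Lemma sum_Rv (R : realFieldType) j (x : 'I_5 -> R) :
  xsum (Rv j x) = 2 * xsum x - 3 * x j.
Proof.
rewrite /xsum /Rv sum_upd /xsum. lra.
Qed.

Lemma sum_ev (R : realFieldType) i : xsum (@ev R i) = 1.
Proof.
rewrite /xsum /ev (bigD1 i) //= eqxx big1 ?addr0 // => k /negbTE -> //.
Qed.

Lemma Dv_R (R : realFieldType) j (v : 'cV[R]_5) k :
  Dv (Rmx R j *m v) k = if k == j then - Dv v j else Dv v k + Dv v j.
Proof.
rewrite /Dv.
have -> : \sum_b (Rmx R j *m v) b 0 = 2 * \sum_b v b 0 - 3 * v j 0.
  under eq_bigr do rewrite Rmx_mul.
  rewrite (sum_upd _ (fun b => v b 0)). lra.
rewrite Rmx_mul; case: (eqVneq k j) => [_|ne]; lra.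
Qed.

Lemma wmass_step (R : realFieldType) i (M : 'M[R]_5) w :
  wmass (Rmx R i *m M) w - wmass M w = Dv (M *m w) i.
Proof.
rewrite /wmass /Dv -mulmxA.
under eq_bigr do rewrite Rmx_mul.
rewrite (sum_upd _ (fun b => (M *m w) b 0)). lra.
Qed.

Lemma word_rcons (R : realFieldType) s j :
  word_mx R (rcons s j) = word_mx R s *m Rmx R j.
Proof.
elim: s => [|a s IH] /=; first by rewrite /word_mx /= mul1mx mulmx1.
by rewrite /word_mx /= -/(word_mx R (rcons s j)) IH mulmxA.
Qed.

Lemma key (R : realFieldType) s : forall (w : 'cV[R]_5) i,
  Dv (word_mx R s *m w) i = \sum_k xw i s k * Dv w k.
Proof.
elim/last_ind: s => [|s j IH] w i.
  rewrite /word_mx /= mul1mx /xw /= /ev (bigD1 i) //= eqxx mul1r big1 ?addr0 //.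
  by move=> k /negbTE ->; rewrite mul0r.
rewrite word_rcons -mulmxA IH /xw foldl_rcons -/(xw i s).
under eq_bigr do rewrite Dv_R.
rewrite (bigD1 j) //= eqxx [in RHS](bigD1 j) //= /Rv eqxx.
under eq_bigr => k /negbTE -> do [].
under [in RHS]eq_bigr => k /negbTE -> do [].
have -> : xsum (@xw R i s) = @xw R i s j + \sum_(k < 5 | k != j) @xw R i s k.
  by rewrite /xsum (bigD1 j).
under eq_bigr do rewrite mulrDr.
rewrite big_split /= -mulr_suml.
lra.
Qed.
Definition act2 (W0 : seq 'I_5) (p c : 'I_5) : Prop :=
  exists u v, rcons (rcons W0 p) c = u ++ v /\ forbidden (rcons v p).

Lemma red_rcons W j : reduced (rcons W j) -> reduced W.
Proof.
case=> H1 H2; split.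
  move=> k hk; have := H1 k; rewrite size_rcons !nth_rcons hk.
  have -> : (k < size W)%N by lia.
  by apply; lia.
move=> v hv; apply: H2; apply: infix_trans hv _.
exact: prefixW (prefix_rcons W j).
Qed.

Lemma red_neq W a b : reduced (rcons (rcons W a) b) -> a != b.
Proof.
case=> H1 _; apply/eqP => ab.
apply: (H1 (size W)); first by rewrite !size_rcons.
by rewrite -!cats1 -catA !nth_cat ltnn subnn /= ltnNge leqnSn /= subSnn /= ab.
Qed.

Lemma F1 W0 p c : act2 W0 p c -> reduced (rcons (rcons (rcons W0 p) c) p) -> False.
Proof.
case=> u [v [e f]] [_ H2]; apply: (H2 (rcons v p)) => //.
by rewrite e rcons_cat; apply: suffix_infix.
Qed.

Lemma F2 W0 p c : act2 (rcons W0 p) c p.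
Proof.
exists W0, [:: p; c; p]; split; first by rewrite -!cats1 -!catA.
exists 2%N; split => //= jj h1 h2; lia.
Qed.

Lemma F3 W1 q p c : act2 W1 q p -> act2 (rcons (rcons W1 q) p) c q.
Proof.
case=> u [v [e [m [hm hs h13 hlast hmid]]]].
exists u, (v ++ [:: c; q]); split; first by rewrite e -!cats1 -!catA.
move: hs; rewrite size_rcons => hs.
have L1 : forall k, (0 < k)%N -> (k <= size v)%N ->
    letter (rcons (v ++ [:: c; q]) c) k = letter (rcons v q) k.
  move=> k k0 kn; rewrite /letter -cats1 -catA nth_cat nth_rcons.
  by have -> : (k.-1 < size v)%N by lia.
have L2 : letter (rcons (v ++ [:: c; q]) c) (size v).+1 = c.
  by rewrite /letter -cats1 -catA nth_cat ltnn subnn.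
have L3 : letter (rcons (v ++ [:: c; q]) c) (size v).+2 = q.
  by rewrite /letter -cats1 -catA nth_cat /= ltnNge leqnSn /= subSnn.
have L4 : letter (rcons (v ++ [:: c; q]) c) (size v).+3 = c.
  rewrite /letter -cats1 -catA nth_cat /=.
  have -> : ((size v).+2 < size v)%N = false by lia.
  by have -> : ((size v).+2 - size v = 2)%N by lia.
have Lq : letter (rcons v q) (size v).+1 = q by rewrite /letter nth_rcons ltnn eqxx.
exists m.+1; split.
- lia.
- by rewrite size_rcons size_cat /=; lia.
- by rewrite !L1 //; lia.
- have -> : (2 * m.+1 - 2 = (size v).+1)%N by lia.
  have -> : (2 * m.+1 = (size v).+3)%N by lia.
  by rewrite L2 L4.
- move=> jj j1 j2.
  have [jle|jgt] := leqP jj (m - 2).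
    rewrite !L1; [exact: hmid|lia|lia|lia|lia].
  have ej : jj = (m - 1)%N by lia.
  rewrite L1; [|lia|lia].
  have -> : (2 * jj + 3 = (size v).+2)%N by lia.
  rewrite L3 ej.
  have -> : (2 * (m - 1) = 2 * m - 2)%N by lia.
  rewrite hlast.
  by have -> : (2 * m = (size v).+1)%N by lia.
Qed.

Definition Inv {R : realFieldType} (W0 : seq 'I_5) (p c : 'I_5) (x : 'I_5 -> R) : Prop :=
  [/\ xsum x - x c - x p <= x c,
      (~ act2 W0 p c -> x p <= x c) &
      forall k, k != c -> k != p ->
        ~ (exists W1 q, W0 = rcons W1 q /\ act2 W1 q p /\ k = q) ->
        2 * x k <= xsum x - x c].

Lemma sum2 (R : realFieldType) (x : 'I_5 -> R) a b :
  (forall k, 0 <= x k) -> a != b -> x a + x b <= xsum x.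
Proof.
move=> x0 ab; rewrite /xsum (bigD1 a) //= (bigD1 b) 1?eq_sym //=.
have : 0 <= \sum_(k < 5 | (k != a) && (k != b)) x k by apply: sumr_ge0.
lra.
Qed.

Lemma sum3 (R : realFieldType) (x : 'I_5 -> R) a b c :
  (forall k, 0 <= x k) -> a != b -> a != c -> b != c -> x a + x b + x c <= xsum x.
Proof.
move=> x0 ab ac bc; rewrite /xsum (bigD1 a) //= (bigD1 b) 1?eq_sym //=.
rewrite (bigD1 c) /=; last by rewrite eq_sym ac eq_sym bc.
have : 0 <= \sum_(k < 5 | ((k != a) && (k != b)) && (k != c)) x k by apply: sumr_ge0.
lra.
Qed.

Lemma sum4 (R : realFieldType) (x : 'I_5 -> R) a b c d :
  (forall k, 0 <= x k) -> a != b -> a != c -> b != c -> a != d -> b != d -> c != d ->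
  x a + x b + x c + x d <= xsum x.
Proof.
move=> x0 ab ac bc ad bd cd; rewrite /xsum (bigD1 a) //= (bigD1 b) 1?eq_sym //=.
rewrite (bigD1 c) /=; last by rewrite eq_sym ac eq_sym bc.
rewrite (bigD1 d) /=; last by rewrite eq_sym ad eq_sym bd eq_sym cd.
have : 0 <= \sum_(k < 5 | (((k != a) && (k != b)) && (k != c)) && (k != d)) x k by apply: sumr_ge0.
lra.
Qed.

Arguments sum2 {R x a b}.
Arguments sum3 {R x a b c}.
Arguments sum4 {R x a b c d}.

Lemma step (R : realFieldType) W0 p c j (x : 'I_5 -> R) :
  (forall k, 0 <= x k) -> Inv W0 p c x -> p != c -> j != c ->
  (j = p -> ~ act2 W0 p c) ->
  (forall k, 0 <= Rv j x k) /\ Inv (rcons W0 p) c j (Rv j x).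
Proof.
move=> x0 [hA hP hQ] pc jc hjp.
have sR := sum_Rv _ j x.
have Rj : Rv j x j = xsum x - 2 * x j by rewrite /Rv eqxx.
have Rk : forall k, k != j -> Rv j x k = x k by move=> k /negbTE kj; rewrite /Rv kj.
have cp : c != p by rewrite eq_sym.
have cj : c != j by rewrite eq_sym.
have Rc := Rk c cj.
have := x0 p; have := x0 c; have := x0 j => xj0 xc0 xp0.
case: (eqVneq j p) => [ejp | njp].
  subst j; have P1 := hP (hjp erefl).
  have s2 := sum2 x0 cp.
  split.
    move=> k; case: (eqVneq k p) => [->|kp]; first by rewrite Rj; lra.
    by rewrite Rk.
  split.
  - rewrite sR Rj Rc; lra.
  - by move=> H; exfalso; apply: H; exact: F2.
  - move=> k kp kc _; rewrite Rk // sR Rj.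
    have s3 : x c + x p + x k <= xsum x by apply: sum3 => //; rewrite eq_sym.
    have := x0 k; lra.
have pj : p != j by rewrite eq_sym.
have s3 := sum3 x0 cp cj pj.
split.
  move=> k; case: (eqVneq k j) => [->|kj]; first by rewrite Rj; lra.
  by rewrite Rk.
split.
- rewrite sR Rj Rc; lra.
- move=> H; rewrite Rc Rj.
  have := hQ j jc njp.
  have : ~ (exists W1 q, W0 = rcons W1 q /\ act2 W1 q p /\ j = q).
    by move=> [W1 [q [e [a eq]]]]; apply: H; rewrite e eq; exact: F3.
  move=> nn /(_ nn); lra.
- move=> k kj kc hk; rewrite Rk // sR Rj.
  case: (eqVneq k p) => [ekp|kp].
    subst k.
    have nact : ~ act2 W0 p c by move=> a; apply: hk; exists W0, p.
    have := hP nact; lra.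
  have := x0 k => xk0.
  have s4 : x c + x p + x j + x k <= xsum x by apply: sum4 => //; rewrite eq_sym.
  lra.
Qed.

Lemma rr_inj (W0 W0' : seq 'I_5) p p' c c' :
  rcons (rcons W0 p) c = rcons (rcons W0' p') c' -> [/\ W0 = W0', p = p' & c = c'].
Proof. by move/rcons_inj => [/rcons_inj [-> ->] ->]. Qed.

Lemma main_inv (R : realFieldType) s : forall i, reduced (i :: s) ->
  (forall k, 0 <= @xw R i s k) /\
  (forall W0 p c, i :: s = rcons (rcons W0 p) c -> Inv W0 p c (@xw R i s)).
Proof.
elim/last_ind: s => [|s j IH] i red.
  split; first by move=> k; rewrite /xw /= /ev ler0n.
  move=> W0 p c e; exfalso; have := congr1 size e; rewrite !size_rcons /=; lia.
have red' : reduced (rcons (i :: s) j) by [].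
have redW : reduced (i :: s) by exact: red_rcons red'.
have [x0 hI] := IH i redW.
have xe : @xw R i (rcons s j) = Rv j (xw i s) by rewrite /xw foldl_rcons.
rewrite xe.
move: IH red redW x0 hI red' xe; case/lastP: s => [|s c] IH red redW x0 hI red' xe.
  have ij : i != j by apply: (@red_neq [::]).
  have ji : j != i by rewrite eq_sym.
  have E : @xw R i [::] = ev i by [].
  rewrite E.
  have y1 : Rv j (@ev R i) j = 1 by rewrite /Rv eqxx sum_ev /ev (negbTE ji) /= ?mulr0n; lra.
  have y2 : Rv j (@ev R i) i = 1 by rewrite /Rv (negbTE ij) /ev eqxx.
  have y0 : forall k, k != j -> k != i -> Rv j (@ev R i) k = 0.
    by move=> k /negbTE kj /negbTE ki; rewrite /Rv kj /ev ki.
  have ys : xsum (Rv j (@ev R i)) = 2 by rewrite sum_Rv sum_ev /ev (negbTE ji) /= ?mulr0n; lra.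
  split.
    move=> k; case: (eqVneq k j) => [->|kj]; first by rewrite y1 ler01.
    case: (eqVneq k i) => [->|ki]; first by rewrite y2 ler01.
    by rewrite y0.
  move=> W0 p c e.
  have [<- <- <-] := @rr_inj [::] W0 i p j c e.
  split.
  - rewrite ys y1 y2; lra.
  - by rewrite y1 y2.
  - by move=> k kj ki _; rewrite y0 // ys y1; lra.
set W0 := belast i s; set p := last i s.
have eW : i :: rcons s c = rcons (rcons W0 p) c by rewrite /W0 /p -lastI.
have I0 := hI W0 p c eW.
have red2 : reduced (rcons (rcons (rcons W0 p) c) j) by rewrite -eW.
have pc : p != c by apply: (@red_neq W0); rewrite -eW.
have jc : j != c by rewrite eq_sym; apply: (@red_neq (rcons W0 p)).
have hjp : j = p -> ~ act2 W0 p c by move=> ejp a; move: red2; rewrite ejp; exact: F1 a.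
have [st1 st2] := @step R W0 p c j _ x0 I0 pc jc hjp.
split => // W0' p' c' e.
rewrite -[i :: _]/(rcons (i :: rcons s c) j) eW in e.
by have [<- <- <-] := @rr_inj _ _ _ _ _ _ e.
Qed.

Lemma lemma4p4 (R : realFieldType) (w : 'cV[R]_5) :
  (forall i : 'I_5, wmass (Rmx R i) w >= wmass 1%:M w) ->
  forall (i : 'I_5) (U' : seq 'I_5), reduced (i :: U') ->
    wmass (word_mx R (i :: U')) w >= wmass (word_mx R U') w.
Proof.
move=> H i U' red.
rewrite -subr_ge0 /word_mx /= -/(word_mx R U') wmass_step key.
apply: sumr_ge0 => k _; apply: mulr_ge0; first exact: (proj1 (@main_inv R U' i red)).
have := @wmass_step R k 1%:M w; rewrite mulmx1 mul1mx => <-.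
by rewrite subr_ge0.
Qed.
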